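(* Let $K=2$ and let $N\ge 0$ be an integer. Then there exists a pair $(n_1^\star,n_2^\star)$ of nonnegative integers with $n_1^\star+n_2^\star=N$ which minimizes $\mathbb{E}[u(n_1,n_2)]$ over all pairs of nonnegative integers $(n_1,n_2)$ with $n_1+n_2=N$, and which satisfies $|n_1^\star-n_2^\star|\le 1$.
   Context: Fix an integer $K\ge 2$. An initial assortment is a vector $\vec n=(n_1,\dots,n_K)$ of nonnegative integers ($n_i$ is the initial stock of goodie type $i$), with $N=\sum_i n_i$ attendees. Attendees arrive one at a time: the stocks start at $\vec n^{(0)}=\vec n$; at each step $t=1,2,\dots$, as long as at least two coordinates of the current stock vector $\vec n^{(t-1)}$ are nonzero, attendee $t$ chooses an index $i$ uniformly at random (independently of the past) among the indices with $n_i^{(t-1)}>0$, and $\vec n^{(t)}=\vec n^{(t-1)}-\vec e_i$, where $\vec e_i$ is the $i$-th standard unit vector. Let $T$ be the first time at which at most one coordinate of $\vec n^{(T)}$ is nonzero. The remaining attendees, who have only one type available, are called unhappy; their number is the random variable $u(\vec n)=N-T$. *)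

(* Defs.v *)
From mathcomp Require Import all_boot all_order all_algebra.
Set Implicit Arguments. Unset Strict Implicit. Unset Printing Implicit Defensive.
Import Order.TTheory GRing.Theory Num.Theory.
Local Open Scope ring_scope.

Section Goodies.
Variable K : nat.
Definition stock := {ffun 'I_K -> nat}.

Definition nnz (n : stock) : nat := #|[set i | (0 < n i)%N]|.

Definition active (n : stock) : bool := (1 < nnz n)%N.

Definition take1 (n : stock) (i : 'I_K) : stock :=
  [ffun j => (n j - (j == i))%N].

(* s is a complete trajectory (sequence of chosen types, stopping exactly at
   time T = size s) of the process started from n *)
Fixpoint valid_traj (n : stock) (s : seq 'I_K) : bool :=
  match s with
  | [::] => ~~ active n
  | i :: s' => [&& active n, (0 < n i)%N & valid_traj (take1 n i) s']
  end.

Fixpoint traj_prob (n : stock) (s : seq 'I_K) : rat :=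
  match s with
  | [::] => 1
  | i :: s' => (nnz n)%:R^-1 * traj_prob (take1 n i) s'
  end.

Definition total (n : stock) : nat := (\sum_i n i)%N.

(* E[u(n)] = sum over all complete trajectories (of length T <= N) of
   probability times number of unhappy attendees N - T. *)
Definition expected_unhappy (n : stock) : rat :=
  \sum_(k < (total n).+1)
     \sum_(t : k.-tuple 'I_K | valid_traj n t)
        traj_prob n t * (total n - k)%:R.
End Goodies.

Definition stock2 (n1 n2 : nat) : stock 2 :=
  [ffun i : 'I_2 => if val i == 0%N then n1 else n2].

Definition Eu2 (n1 n2 : nat) : rat := expected_unhappy (stock2 n1 n2).

(* Main.v *)
Require Import Defs.
From mathcomp Require Import all_boot all_order all_algebra.
From mathcomp Require Import zify ring lra.
Set Implicit Arguments. Unset Strict Implicit. Unset Printing Implicit Defensive.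
Import Order.TTheory GRing.Theory Num.Theory.
Local Open Scope ring_scope.

Lemma big_tuple_cons (I : finType) k (F : k.+1.-tuple I -> rat) :
  \sum_(t : k.+1.-tuple I) F t = \sum_(i : I) \sum_(t : k.-tuple I) F [tuple of i :: t].
Proof.
rewrite pair_big /=.
rewrite (reindex (fun p : I * k.-tuple I => [tuple of p.1 :: p.2])) //=.
exists (fun t : k.+1.-tuple I => (thead t, [tuple of behead t])).
  by move=> [i t] _ /=; congr pair; apply/val_inj.
move=> t _; apply/val_inj => /=; by case: t => [[|x s] //=].
Qed.

Local Notation total := Defs.total.
Section Gen.
Variable K : nat.
Implicit Types n : stock K.

Definition S n k : rat := \sum_(t : k.-tuple 'I_K | valid_traj n t) traj_prob n t * (total n - k)%:R.

Lemma E_S n : expected_unhappy n = \sum_(k < (total n).+1) S n k.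
Proof. by []. Qed.

Lemma S0 n : S n 0 = if active n then 0 else (total n)%:R.
Proof.
rewrite /S big_mkcond /= (big_pred1 [tuple]) /=; last by move=> t; apply/esym/eqP; rewrite [t]tuple0.
by case: (active n) => /=; rewrite ?mul1r ?subn0.
Qed.

Lemma total_take1 n i : (0 < n i)%N -> total (take1 n i) = (total n).-1.
Proof.
move=> ni; rewrite /total (bigD1 i) //= [in RHS](bigD1 i) //= ffunE eqxx.
rewrite (eq_bigr (fun j => n j)); last by move=> j /negbTE ji; rewrite ffunE ji subn0.
set s := (\sum_(j | _) _)%N.
change (n i - 1 + s = (n i + s).-1)%N; lia.
Qed.

Lemma SS n k : S n k.+1 =
  if active n then \sum_(i | (0 < n i)%N) (nnz n)%:R^-1 * S (take1 n i) k else 0.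
Proof.
rewrite /S big_mkcond big_tuple_cons /=.
case: (active n) => /=; last by rewrite big1 // => i _; rewrite big1.
rewrite [RHS]big_mkcond; apply: eq_bigr => i _.
case: (ltnP 0 (n i)) => ni /=; last by rewrite big1.
rewrite mulr_sumr [RHS]big_mkcond; apply: eq_bigr => t _.
case: (valid_traj _ _) => //; rewrite total_take1 // mulrA; congr (_ * _%:R); lia.
Qed.

Lemma active_total n : active n -> (0 < total n)%N.
Proof.
move=> act; rewrite lt0n; apply/negP => /eqP T0.
move: act; rewrite /active /nnz.
have -> : [set i | (0 < n i)%N] = set0.
  apply/setP => i; rewrite !inE.
  move/eqP: T0; rewrite /total sum_nat_eq0 => /forallP /(_ i) /=.
  by move/eqP ->.
by rewrite cards0.
Qed.

Lemma E_inactive n : ~~ active n -> expected_unhappy n = (total n)%:R.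
Proof.
move=> na; rewrite E_S big_ord_recl S0 (negbTE na) big1 ?addr0 // => k _.
by rewrite lift0 SS (negbTE na).
Qed.

Lemma E_active n : active n -> expected_unhappy n =
  \sum_(i | (0 < n i)%N) (nnz n)%:R^-1 * expected_unhappy (take1 n i).
Proof.
move=> act; have := active_total act.
rewrite E_S; case Tn: (total n) => [//|T] _.
rewrite big_ord_recl S0 act add0r.
rewrite (eq_bigr (fun k : 'I_T.+1 => \sum_(i | (0 < n i)%N) (nnz n)%:R^-1 * S (take1 n i) k)); last first.
  by move=> k _; rewrite lift0 SS act.
rewrite exchange_big; apply: eq_bigr => i ni.
by rewrite E_S -mulr_sumr total_take1 // Tn.
Qed.
End Gen.

Lemma total2 a b : total (stock2 a b) = (a + b)%N.
Proof. by rewrite /total !big_ord_recl big_ord0 /= !ffunE /= addn0. Qed.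

Lemma nnz2 a b : nnz (stock2 a b) = ((0 < a)%N + (0 < b)%N)%N.
Proof.
rewrite /nnz -sum1_card big_mkcond !big_ord_recl big_ord0 /= !inE !ffunE /=.
by case: (0 < a)%N; case: (0 < b)%N.
Qed.

Lemma take1_2 a b (i : 'I_2) : take1 (stock2 a b) i =
  if val i == 0%N then stock2 (a - 1) b else stock2 a (b - 1).
Proof.
apply/ffunP => j; rewrite !ffunE.
case: i => [[|[|//]] ?]; case: j => [[|[|//]] ?]; rewrite /= ffunE /=.
all: rewrite -?val_eqE /= ?subn0 ?subn1 //.
Qed.

Lemma Eu2_0l b : Eu2 0 b = b%:R.
Proof. rewrite /Eu2 E_inactive ?total2 //; rewrite /active nnz2 /=; by case: (0 < b)%N. Qed.
Lemma Eu2_0r a : Eu2 a 0 = a%:R.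
Proof. rewrite /Eu2 E_inactive ?total2 ?addn0 //; rewrite /active nnz2 /= addn0; by case: (0 < a)%N. Qed.

Lemma Eu2_S a b : Eu2 a.+1 b.+1 = (Eu2 a b.+1 + Eu2 a.+1 b) / 2.
Proof.
rewrite /Eu2 E_active; last by rewrite /active nnz2.
rewrite big_mkcond !big_ord_recl big_ord0 /= !ffunE /= nnz2 /= !take1_2 /= !subn1 /=.
rewrite addr0 -[(1+1)%N]/2%N mulrDl !(mulrC 2^-1) //.
Qed.

Lemma Eu2_sym a b : Eu2 a b = Eu2 b a.
Proof.
elim: a b => [|a IH] b; first by case: b => [|b]; rewrite ?Eu2_0l ?Eu2_0r.
elim: b => [|b IHb]; first by rewrite Eu2_0l Eu2_0r.
by rewrite !Eu2_S IH IHb addrC.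
Qed.

Lemma Eu2_ub a b : Eu2 a b <= (a + b)%:R.
Proof.
elim: a b => [|a IH] b; first by rewrite Eu2_0l.
elim: b => [|b IHb]; first by rewrite Eu2_0r addn0.
rewrite Eu2_S; have := IH b.+1; have := IHb.
rewrite !natrD -!(addn1 a) -!(addn1 b) !natrD. lra.
Qed.

Lemma step w x : (x <= w)%N -> Eu2 x.+1 w.+1 <= Eu2 x w.+2.
Proof.
elim: x w => [|x IHx] w hx.
  rewrite Eu2_S !Eu2_0l; have := Eu2_ub 1 w.
  rewrite -!(addn1 w) !natrD /=. lra.
elim: w hx => [|w IHw] hx; first by [].
rewrite (Eu2_S x.+1 w.+1) (Eu2_S x w.+2).
have h1 := IHx w.+1 (ltnW hx).
have h2 : Eu2 x.+2 w.+1 <= Eu2 x.+1 w.+2.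
  case: (ltnP x w) => hxw; first exact: IHw.
  have -> : w = x by lia.
  by rewrite Eu2_sym.
lra.
Qed.

Lemma bal d m1 m2 : (m2 - m1 <= d)%N -> (m1 <= m2)%N ->
  Eu2 ((m1 + m2)./2) (m1 + m2 - (m1 + m2)./2) <= Eu2 m1 m2.
Proof.
elim: d m1 m2 => [|d IH] m1 m2 hd h.
  have e : ((m1 + m2)./2 = m1)%N by rewrite -divn2; lia.
  by rewrite e (_ : (m1 + m2 - m1 = m2)%N) //; lia.
case: (leqP m2 m1.+1) => h2.
  have e : ((m1 + m2)./2 = m1)%N by rewrite -divn2; lia.
  by rewrite e (_ : (m1 + m2 - m1 = m2)%N) //; lia.
case: m2 hd h h2 => [|[|m2]] hd h h2; try lia.
have e : (m1.+1 + m2.+1 = m1 + m2.+2)%N by lia.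
rewrite -e; apply: le_trans (step _) ; last lia.
apply: IH; lia.
Qed.

Theorem theorem1 (N : nat) :
  exists n1 n2 : nat,
    [/\ (n1 + n2)%N = N,
        (forall m1 m2 : nat, (m1 + m2)%N = N -> Eu2 n1 n2 <= Eu2 m1 m2)
      & (n1 <= n2 + 1)%N /\ (n2 <= n1 + 1)%N].
Proof.
exists N./2, (N - N./2)%N; split.
- rewrite -divn2; lia.
- move=> m1 m2 hm; case: (leqP m1 m2) => h.
    by rewrite -hm; apply: (bal (leqnn _)).
  rewrite [Eu2 m1 m2]Eu2_sym (_ : N = m2 + m1)%N; last lia.
  apply: (bal (leqnn _)); lia.
- rewrite -divn2; lia.
Qed.
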